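(* Assume the standing hypotheses described in the context. If $x,y\in\mathbb X$ and $\|x-x_0\|+\|y-x\|<R$, then \[\|F'(x_0)^{-1}E_F(y,x)\|\le e_f(\|x-x_0\|+\|y-x\|,\ \|x-x_0\|).\]
   Context: Standing hypotheses: $\mathbb X,\mathbb Y$ are Banach spaces; $B(x,r)$ is the open ball. $R\in\mathbb R$, $C\subseteq\mathbb X$, $F:C\to\mathbb Y$ is continuous and continuously differentiable on $\mathrm{int}(C)$, $x_0\in\mathrm{int}(C)$ with $F'(x_0)$ non-singular, $f:[0,R)\to\mathbb R$ is continuously differentiable, $B(x_0,R)\subseteq C$, $\|F'(x_0)^{-1}[F'(y)-F'(x)]\|\le f'(\|y-x\|+\|x-x_0\|)-f'(\|x-x_0\|)$ for all $x,y\in B(x_0,R)$ with $\|x-x_0\|+\|y-x\|<R$, $\|F'(x_0)^{-1}F(x_0)\|\le f(0)$, and (h1) $f(0)>0$, $f'(0)=-1$; (h2) $f'$ is strictly increasing and convex; (h3) $f(t)<0$ for some $t\in(0,R)$. Linearization errors: $E_F(y,x):=F(y)-[F(x)+F'(x)(y-x)]$ for $x\in B(x_0,R)$, $y\in C$; $e_f(v,t):=f(v)-[f(t)+f'(t)(v-t)]$ for $t,v\in[0,R)$. *)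

(* Defs.v *)
From HB Require Import structures.
From mathcomp Require Import all_boot all_order all_algebra.
From mathcomp Require Import all_classical all_reals all_analysis.
Set Implicit Arguments. Unset Strict Implicit. Unset Printing Implicit Defensive.
Import Order.TTheory GRing.Theory Num.Theory.
Import numFieldNormedType.Exports.
Local Open Scope classical_set_scope.
Local Open Scope ring_scope.

Definition lin_err_F (R : realType) (X Y : normedModType R)
  (F : X -> Y) (y x : X) : Y :=
  F y - (F x + 'd F x (y - x)).

Definition lin_err_f (R : realType) (f f' : R -> R) (v t : R) : R :=
  f v - (f t + f' t * (v - t)).

Definition is_deriv_on_0R (R : realType) (Rr : R) (f f' : R -> R) : Prop :=
  forall t, 0 <= t < Rr ->
    (fun h => (f (t + h) - f t) / h) @
      within [set h | 0 <= t + h < Rr] ((0 : R)^') --> f' t.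

(* Operator-norm continuity of x |-> F'(x) on a set S, written out pointwise:
   for every eps > 0 there is delta > 0 with ||F'(z) - F'(x)|| <= eps. *)
Definition diff_continuous_on (R : realType) (X Y : normedModType R)
  (F : X -> Y) (S : set X) : Prop :=
  forall x, S x -> forall eps : R, 0 < eps -> exists2 delta : R, 0 < delta &
    forall z, S z -> `|z - x| < delta ->
      forall v, `|'d F z v - 'd F x v| <= eps * `|v|.

(* Main.v *)
Require Import Defs.
From HB Require Import structures.
From mathcomp Require Import all_boot all_order all_algebra.
From mathcomp Require Import all_classical all_reals all_analysis.
From mathcomp Require Import lra ring.
Import Order.TTheory GRing.Theory Num.Theory.
Import numFieldNormedType.Exports.
Local Open Scope classical_set_scope.
Local Open Scope ring_scope.

Lemma real_ind (R : realType) (psi : R -> R) :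
  (forall c, 0 <= c < 1 -> exists2 d : R, 0 < d &
     forall h, 0 < h < d -> psi (c + h) <= psi c) ->
  (forall c, 0 < c <= 1 -> forall e : R, 0 < e -> exists2 d : R, 0 < d &
     forall h, 0 < h < d -> h <= c -> psi c <= psi (c - h) + e) ->
  psi 1 <= psi 0.
Proof.
move=> hr hl.
pose A := [set t : R | 0 <= t <= 1 /\ forall s, 0 <= s <= t -> psi s <= psi 0].
have A0 : A 0.
  split; first by rewrite lexx ler01.
  by move=> s /andP[s0 s0']; have -> : s = 0 by apply/le_anti; rewrite s0 s0'.
have hsA : has_sup A.
  split; first by exists 0.
  by exists 1 => t [/andP[_ ->]].
set c := sup A.
have c0 : 0 <= c by apply: sup_upper_bound.
have c1 : c <= 1 by apply: ge_sup; [exists 0 | move=> t [/andP[_ ->]]].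
have below : forall s, 0 <= s < c -> psi s <= psi 0.
  move=> s /andP[s0 sc].
  have cs : 0 < c - s by rewrite subr_gt0.
  have [t [_ Ht] st] := sup_adherent cs hsA.
  apply: Ht; rewrite s0 /=; apply: ltW; move: st; rewrite /c; lra.
have Ac : A c.
  split; first by rewrite c0 c1.
  move=> s /andP[s0 sc]; case: (ltrP s c) => [sc'|cs]; first by apply: below; rewrite s0.
  have -> : s = c by apply/le_anti; rewrite sc cs.
  case: (ltrP 0 c) => [cpos|c0'].
    apply/ler_addgt0Pr => e e0.
    have hc' : 0 < c <= 1 by rewrite cpos c1.
    have [d d0 Hd] := hl c hc' e e0.
    pose h := Num.min d c / 2.
    have hpos : 0 < h by rewrite /h divr_gt0 // lt_min d0 cpos.
    have hd : h < d.
      rewrite /h; have : Num.min d c <= d by rewrite ge_min lexx.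
      have : 0 < Num.min d c by rewrite lt_min d0 cpos.
      lra.
    have hc : h <= c.
      rewrite /h; have : Num.min d c <= c by rewrite ge_min lexx orbT.
      lra.
    apply: le_trans (Hd h _ hc) _; first by rewrite hpos hd.
    rewrite lerD2r; apply: below; lra.
  have -> : c = 0 by apply/le_anti; rewrite c0 c0'.
  by [].
case: (ltrP c 1) => [c1'|]; last first.
  move=> c1''; have <- : c = 1 by apply/le_anti; rewrite c1 c1''.
  by case: Ac => _; apply; rewrite c0 lexx.
have hc' : 0 <= c < 1 by rewrite c0 c1'.
have [d d0 Hd] := hr c hc'.
pose h := Num.min d (1 - c) / 2.
have hpos : 0 < h by rewrite /h divr_gt0 // lt_min d0 subr_gt0 c1'.
have hd : h < d.
  rewrite /h; have : Num.min d (1 - c) <= d by rewrite ge_min lexx.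
  have : 0 < Num.min d (1 - c) by rewrite lt_min d0 subr_gt0 c1'.
  lra.
have hc : h <= 1 - c.
  rewrite /h; have : Num.min d (1 - c) <= 1 - c by rewrite ge_min lexx orbT.
  lra.
have Ach : A (c + h).
  split; first by apply/andP; split; lra.
  move=> s /andP[s0 sch]; case: (lerP s c) => [sc|cs].
    by case: Ac => _; apply; rewrite s0.
  have -> : s = c + (s - c) by rewrite addrC subrK.
  apply: le_trans (Hd (s - c) _) _; first by apply/andP; split; lra.
  by case: Ac => _; apply; rewrite c0 lexx.
have : c + h <= c by apply: sup_upper_bound.
lra.
Qed.
Lemma quot_eps (R : realType) (V : normedModType R) (p : R -> V) (L : V) (D : set R) :
  p @ within D (0:R)^' --> L -> forall e : R, 0 < e -> exists2 d : R, 0 < d &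
   forall h, h != 0 -> `|h| < d -> D h -> `|p h - L| < e.
Proof.
move=> /cvgrPdist_lt H e e0; have := H e e0.
rewrite near_withinE /= /dnbhs near_withinE => /nbhs_ballP[d /= d0 Hd].
exists d => // h h0 hd Dh.
rewrite distrC; apply: Hd => //.
by rewrite /ball /= sub0r normrN.
Qed.

Lemma quot_eps' (R : realType) (V : normedModType R) (p : R -> V) (L : V) :
  p @ (0:R)^' --> L -> forall e : R, 0 < e -> exists2 d : R, 0 < d &
   forall h, h != 0 -> `|h| < d -> `|p h - L| < e.
Proof.
move=> /cvgrPdist_lt H e e0; have := H e e0.
rewrite /dnbhs near_withinE => /nbhs_ballP[d /= d0 Hd].
exists d => // h h0 hd.
rewrite distrC; apply: Hd => //.
by rewrite /ball /= sub0r normrN.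
Qed.

Arguments quot_eps {R V p L D}.
Arguments quot_eps' {R V p L}.

Lemma main_aux (R : realType) (X Y : completeNormedModType R)
  (Rr : R) (C : set X) (F : X -> Y) (x0 : X)
  (Finv : {linear Y -> X}) (f f' : R -> R)
  (hFdiff : forall x, interior C x -> differentiable F x)
  (hFinv_cont : continuous Finv)
  (hf : is_deriv_on_0R Rr f f')
  (hball : ball x0 Rr `<=` C)
  (hmaj : forall x y, ball x0 Rr x -> ball x0 Rr y ->
     `|x - x0| + `|y - x| < Rr ->
     forall v : X, `|Finv ('d F y v - 'd F x v)|
        <= (f' (`|y - x| + `|x - x0|) - f' `|x - x0|) * `|v|) :
  forall x y : X, `|x - x0| + `|y - x| < Rr ->
    `|Finv (lin_err_F F y x)|
      <= lin_err_f f f' (`|x - x0| + `|y - x|) `|x - x0|.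
Proof.
move=> x y hxy.
set a := `|x - x0|; set b := `|y - x|.
have a0 : 0 <= a by exact: normr_ge0.
have b0 : 0 <= b by exact: normr_ge0.
have [k k0 Hk] := linear_lipschitz hFinv_cont.
have [b0'|bpos] := eqVneq b 0.
  have yx : y = x by apply/eqP; rewrite -subr_eq0 -normr_eq0 -/b b0'.
  rewrite /lin_err_F /lin_err_f yx subrr linear0 addr0 subrr linear0 normr0.
  by rewrite -/b b0' addr0 subrr mulr0 addr0 subrr.
have bp : 0 < b by rewrite lt_def bpos b0.
set d := y - x.
have hint : ball x0 Rr `<=` interior C.
  by rewrite -(open_subsetE _ (@ball_open _ _ x0 Rr)).
have inball : forall c, 0 <= c <= 1 -> ball x0 Rr (x + c *: d).
  move=> c /andP[c0 c1]; rewrite -ball_normE /ball_ /=.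
  rewrite opprD addrA (le_lt_trans (ler_normB _ _)) //.
  rewrite normrZ (ger0_norm c0) distrC; apply: le_lt_trans hxy.
  by rewrite lerD2l /d -[X in _ <= X]mul1r ler_wpM2r.
have zx : forall c, 0 <= c -> `|x + c *: d - x| = c * b.
  by move=> c c0; rewrite addrC addKr normrZ ger0_norm.
have hab : a + b < Rr by [].
have Ddiff : forall c, 0 <= c <= 1 ->
   (fun h : R => h^-1 *: (F (h *: d + (x + c *: d)) - F (x + c *: d))) @ (0:R)^'
     --> 'd F (x + c *: d) d.
  move=> c hc; have hd := hFdiff _ (hint _ (inball c hc)).
  rewrite -deriveE //; have := @diff_derivable _ _ _ F _ d hd. exact.
pose D0 := 'd F x d.
pose g := fun tau : R => Finv (F (x + tau *: d)) - tau *: Finv D0.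
pose phi := fun tau : R => f (a + tau * b) - tau * (f' a * b).
have gstep : forall c s, g (c + s) - g c =
   Finv (F (s *: d + (x + c *: d)) - F (x + c *: d)) - s *: Finv D0.
  move=> c s; rewrite /g.
  have -> : x + (c + s) *: d = s *: d + (x + c *: d).
    by rewrite scalerDl addrA addrC.
  move: (F (s *: d + _)) (F (x + c *: d)) (Finv D0) => A B w.
  rewrite linearB /= scalerDl.
  set A' := Finv A; set B' := Finv B.
  rewrite [Finv (A - B)]linearB -/A' -/B' opprK opprD !addrA.
  by rewrite addrAC -[_ - s *: w + c *: w]addrA [- _ + _]addrC !addrA subrK addrAC.
have pstep : forall c s, phi (c + s) - phi c =
   f (a + c * b + s * b) - f (a + c * b) - s * (f' a * b).
  move=> c s; rewrite /phi mulrDl addrA; lra.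
have Fq : forall (z : X) s, s != 0 -> F (s *: d + z) - F z = s *: (s^-1 *: (F (s *: d + z) - F z)).
  by move=> z s s0; rewrite scalerA divff // scale1r.
have fq : forall t s, s != 0 -> f (t + s) - f t = s * ((f (t + s) - f t) / s).
  by move=> t s s0; rewrite mulrC divfK.
have key : forall e : R, 0 < e -> `|g 1 - g 0| <= phi 1 - phi 0 + e.
  move=> e e0.
  pose psi := fun tau => `|g tau - g 0| - (phi tau - phi 0) - e * tau.
  suff : psi 1 <= psi 0.
    by rewrite /psi subrr normr0 subrr mulr0 mulr1; lra.
  apply: real_ind.
  - move=> c /andP[c0 c1].
    have hc : 0 <= c <= 1 by rewrite c0 ltW.
    have cb : c * b <= b by rewrite -[X in _ <= X]mul1r ler_wpM2r // ltW.
    have ht : 0 <= a + c * b < Rr.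
      by apply/andP; split; [rewrite addr_ge0 // mulr_ge0 | lra].
    have e2k : 0 < e / (2 * k) by rewrite divr_gt0 // mulr_gt0.
    have [d1 d1p H1] := quot_eps' (Ddiff c hc) _ e2k.
    have e2b : 0 < e / (2 * b) by rewrite divr_gt0 // mulr_gt0.
    have [d2 d2p H2] := quot_eps (hf _ ht) _ e2b.
    have d3p : 0 < (Rr - (a + c * b)) / b by rewrite divr_gt0 // subr_gt0; case/andP: ht.
    exists (Num.min d1 (Num.min (d2 / b) ((Rr - (a + c * b)) / b))).
      by rewrite !lt_min d1p d3p divr_gt0.
    move=> h /andP[h0]; rewrite !lt_min => /and3P[hd1 hd2 hd3].
    have hn0 : h != 0 by rewrite gt_eqF.
    have hbn0 : h * b != 0 by rewrite mulf_neq0.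
    have hb2 : h * b < d2 by rewrite -ltr_pdivlMr.
    have hb3 : h * b < Rr - (a + c * b) by rewrite -ltr_pdivlMr.
    have hh1 : `|h| < d1 by rewrite gtr0_norm.
    have hh2 : `|h * b| < d2 by rewrite gtr0_norm // mulr_gt0.
    have Q := H1 h hn0 hh1.
    have q := H2 (h * b) hbn0 hh2.
    have q2 : `|(f (a + c * b + h * b) - f (a + c * b)) / (h * b) - f' (a + c * b)| < e / (2 * b).
      apply: q; apply/andP; split; last by lra.
      by case/andP: ht => ht0 _; rewrite addr_ge0 // mulr_ge0 // ltW.
    move: Q q2.
    set z := x + c *: d; set t := a + c * b.
    set Qv := h^-1 *: _; set qv := (f (t + h * b) - f t) / (h * b) => Q1 q1.
    have gst := gstep c h; rewrite -/z (Fq z h hn0) -/Qv in gst.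
    have pst := pstep c h; rewrite -/t (fq t (h * b) hbn0) -/qv in pst.
    have Nm : `|g (c + h) - g c| <= h * (k * `|Qv - 'd F z d| + (f' t - f' a) * b).
      rewrite gst linearZ /= -scalerBr normrZ gtr0_norm // ler_pM2l //.
      have -> : Finv Qv - Finv D0 = Finv (Qv - 'd F z d) + Finv ('d F z d - D0).
        by move: ('d F z d) => w; rewrite !linearB /= addrA subrK.
      apply: le_trans (ler_normD _ _) _; apply: lerD; first exact: Hk.
      have bx : ball x0 Rr x by rewrite -ball_normE /ball_ /= distrC -/a; lra.
      have hzx : `|x - x0| + `|z - x| < Rr by rewrite zx // -/a; lra.
      have := hmaj x z bx (inball c hc) hzx d.
      by rewrite zx // -/a [c * b + a]addrC -/t; apply.
    have T := ler_distD (g c) (g (c + h)) (g 0).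
    have Q' : `|Qv - 'd F z d| * (2 * k) < e by rewrite -ltr_pdivlMr // mulr_gt0.
    have q' : `|qv - f' t| * (2 * b) < e by rewrite -ltr_pdivlMr // mulr_gt0.
    have qn : f' t - qv <= `|qv - f' t| by rewrite distrC ler_norm.
    have B : k * `|Qv - 'd F z d| + b * (f' t - qv) - e < 0.
      have : b * (f' t - qv) <= b * `|qv - f' t| by rewrite ler_wpM2l // ltW.
      lra.
    have hB : h * (k * `|Qv - 'd F z d| + b * (f' t - qv) - e) <= 0.
      by rewrite pmulr_rle0 // ltW.
    rewrite /psi /=.
    lra.
  - move=> c /andP[c0 c1] e' e'0.
    have hc : 0 <= c <= 1 by rewrite ltW.
    have cb : c * b <= b by rewrite -[X in _ <= X]mul1r ler_wpM2r.
    have ht : 0 <= a + c * b < Rr.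
      by apply/andP; split; [rewrite addr_ge0 // mulr_ge0 // ltW | lra].
    have [d1 d1p H1] := quot_eps' (Ddiff c hc) _ ltr01.
    have [d2 d2p H2] := quot_eps (hf _ ht) _ ltr01.
    set z := x + c *: d; set t := a + c * b.
    pose M := k * (`|'d F z d| + 1) + `|Finv D0| + b * (`|f' t| + 1) + `|f' a| * b.
    have M0 : 0 <= M.
      rewrite /M; have := normr_ge0 ('d F z d); have := normr_ge0 (Finv D0).
      have := normr_ge0 (f' t); have := normr_ge0 (f' a); nra.
    have M1 : 0 < M + 1 by lra.
    exists (Num.min d1 (Num.min (d2 / b) (e' / (M + 1)))).
      by rewrite !lt_min d1p !divr_gt0.
    move=> h /andP[h0]; rewrite !lt_min => /and3P[hd1 hd2 hd3] hc'.
    have hn0 : -h != 0 by rewrite oppr_eq0 gt_eqF.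
    have hbn0 : -h * b != 0 by rewrite mulf_neq0.
    have hh1 : `|-h| < d1 by rewrite normrN gtr0_norm.
    have hh2 : `|-h * b| < d2 by rewrite normrM normrN !gtr0_norm // -ltr_pdivlMr.
    have Q := H1 (-h) hn0 hh1.
    have hdom : 0 <= t + - h * b < Rr.
      have : 0 <= (c - h) * b by rewrite mulr_ge0 // subr_ge0.
      have : 0 < h * b by rewrite mulr_gt0.
      move: ht; rewrite /t => /andP[ht0 ht1].
      move=> H3 H4; apply/andP; split; lra.
    have q := H2 (-h * b) hbn0 hh2 hdom.
    move: Q q.
    set Qv := (-h)^-1 *: _; set qv := (f (t + - h * b) - f t) / (- h * b) => Q1 q1.
    have gst := gstep c (-h); rewrite -/z (Fq z (-h) hn0) -/Qv in gst.
    have pst := pstep c (-h); rewrite -/t (fq t (-h * b) hbn0) -/qv in pst.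
    have Nm : `|g (c - h) - g c| <= h * (k * (`|'d F z d| + 1) + `|Finv D0|).
      rewrite gst linearZ /= -scalerBr normrZ normrN gtr0_norm // ler_pM2l //.
      apply: le_trans (ler_normB _ _) _.
      apply: lerD => //; apply: le_trans (Hk _) _; rewrite ler_pM2l //.
      have := ler_normD (Qv - 'd F z d) ('d F z d); rewrite subrK.
      lra.
    have Pm : `|phi (c - h) - phi c| <= h * (b * (`|f' t| + 1) + `|f' a| * b).
      rewrite pst.
      have -> : - h * b * qv - - h * (f' a * b) = - h * (b * qv - f' a * b) by ring.
      rewrite normrM normrN (gtr0_norm h0) ler_pM2l //.
      apply: le_trans (ler_normB _ _) _.
      rewrite [`|b * qv|]normrM [`|f' a * b|]normrM (ger0_norm b0); apply: lerD; last by rewrite mulrC.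
      rewrite ler_wpM2l //.
      have := ler_normD (qv - f' t) (f' t); rewrite subrK.
      rewrite -/t in q1; lra.
    have hM : h * (M + 1) < e' by rewrite -ltr_pdivlMr.
    have T := ler_distD (g (c - h)) (g c) (g 0).
    have P2 : phi (c - h) - phi c <= `|phi (c - h) - phi c| by rewrite ler_norm.
    rewrite [`|g c - g (c - h)|]distrC in T.
    rewrite /psi /=.
    have : 0 <= e * h by rewrite mulr_ge0 // ltW.
    rewrite /M in hM.
    have S : `|g (c - h) - g c| + `|phi (c - h) - phi c| < e'.
      move: Nm Pm hM h0; clear; lra.
    lra.
have -> : lin_err_F F y x = F (x + 1 *: d) - F (x + 0 *: d) - D0.
  rewrite scale1r scale0r addr0 /d [x + _]addrC subrK /lin_err_F opprD addrA.
  by [].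
rewrite (_ : lin_err_f _ _ _ _ = phi 1 - phi 0); last first.
  rewrite /lin_err_f /phi !mul1r !mul0r addr0 subr0 addrAC subrr add0r; lra.
apply/ler_addgt0Pr => e e0; apply: le_trans (key e e0).
by rewrite /g scale1r scale0r linearB /= scale1r scale0r subr0 addrAC [Finv (F _ - _)]linearB.
Qed.

Theorem lemma3p2 (R : realType) (X Y : completeNormedModType R)
  (Rr : R) (C : set X) (F : X -> Y) (x0 : X)
  (Finv : {linear Y -> X}) (f f' : R -> R)
  (* F continuous on C, continuously differentiable on int(C) *)
  (hFcont : {within C, continuous F})
  (hFdiff : forall x, interior C x -> differentiable F x)
  (hFC1 : diff_continuous_on F (interior C))
  (* x0 in int(C), F'(x0) non-singular with (bounded) inverse Finv *)
  (hx0 : interior C x0)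
  (hFinv_cont : continuous Finv)
  (hFinv_l : forall v : X, Finv ('d F x0 v) = v)
  (hFinv_r : forall w : Y, 'd F x0 (Finv w) = w)
  (* f : [0,Rr) -> R continuously differentiable, with derivative f' *)
  (hf : is_deriv_on_0R Rr f f')
  (hf'cont : {within `[0, Rr[, continuous f'})
  (hball : ball x0 Rr `<=` C)
  (* majorant condition (operator-norm bound written pointwise) *)
  (hmaj : forall x y, ball x0 Rr x -> ball x0 Rr y ->
     `|x - x0| + `|y - x| < Rr ->
     forall v : X, `|Finv ('d F y v - 'd F x v)|
        <= (f' (`|y - x| + `|x - x0|) - f' `|x - x0|) * `|v|)
  (hF0 : `|Finv (F x0)| <= f 0)
  (* (h1) *)
  (h1a : 0 < f 0) (h1b : f' 0 = -1)
  (* (h2) f' strictly increasing and convex on [0,Rr) *)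
  (h2inc : forall s t, 0 <= s -> s < t -> t < Rr -> f' s < f' t)
  (h2cvx : forall s t l, 0 <= s < Rr -> 0 <= t < Rr -> 0 <= l <= 1 ->
     f' (l * s + (1 - l) * t) <= l * f' s + (1 - l) * f' t)
  (* (h3) *)
  (h3 : exists2 t, 0 < t < Rr & f t < 0) :
  forall x y : X, `|x - x0| + `|y - x| < Rr ->
    `|Finv (lin_err_F F y x)|
      <= lin_err_f f f' (`|x - x0| + `|y - x|) `|x - x0|.
Proof.
exact: (@main_aux R X Y Rr C F x0 Finv f f' hFdiff hFinv_cont hf hball hmaj).
Qed.
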